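(* Let $q=p_1p_2$ with $p_1\neq p_2$ odd primes. Consider the map $\mathcal S$ sending a pair of integers $(q_1,q_2)$ with $q_1,q_2,q_1+q_2,q_1-q_2$ all $\not\equiv 0\pmod q$ to the triple of polynomials $\mathcal S(q_1,q_2)=(\psi(q_1,q_2),\alpha(q_1,q_2),\beta(q_1,q_2))$. Then $\mathcal S$ takes at most $11$ distinct values.
   Context: Let $\gamma=e^{2\pi i/q}$. Let $A$ be the set of residues in $\{1,\dots,q-1\}$ coprime to $q$, $B=\{xp_1: x=1,\dots,p_2-1\}$ and $C=\{xp_2: x=1,\dots,p_1-1\}$. For a pair $(q_1,q_2)$ and a set $S\subset\{1,\dots,q-1\}$ put $\Pi_S(q_1,q_2)(z)=\sum_{l\in S}\prod_{i=1}^{2}(z-\gamma^{q_il})(z-\gamma^{-q_il})$; then $\psi=\Pi_A$, $\alpha=\Pi_B$, $\beta=\Pi_C$. *)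

(* Defs.v *)
From HB Require Import structures.
From mathcomp Require Import all_boot all_order all_algebra all_field.
Set Implicit Arguments. Unset Strict Implicit. Unset Printing Implicit Defensive.
Import Order.TTheory GRing.Theory Num.Theory.
Local Open Scope ring_scope.

Definition PiS (g : algC) (S : seq nat) (q1 q2 : int) : {poly algC} :=
  \sum_(l <- S)
    (('X - (g ^ (q1 * l%:Z))%:P) * ('X - (g ^ (- (q1 * l%:Z)))%:P) *
     (('X - (g ^ (q2 * l%:Z))%:P) * ('X - (g ^ (- (q2 * l%:Z)))%:P))).

Definition setA (q : nat) : seq nat := [seq l <- iota 1 q.-1 | coprime l q].
Definition setB (p1 p2 : nat) : seq nat := [seq (x * p1)%N | x <- iota 1 p2.-1].
Definition setC (p1 p2 : nat) : seq nat := [seq (x * p2)%N | x <- iota 1 p1.-1].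

Definition psi (g : algC) (p1 p2 : nat) := PiS g (setA (p1 * p2)).
Definition alpha (g : algC) (p1 p2 : nat) := PiS g (setB p1 p2).
Definition beta (g : algC) (p1 p2 : nat) := PiS g (setC p1 p2).

Definition Smap (g : algC) (p1 p2 : nat) (q1 q2 : int)
  : {poly algC} * {poly algC} * {poly algC} :=
  (psi g p1 p2 q1 q2, alpha g p1 p2 q1 q2, beta g p1 p2 q1 q2).

Definition admissible (q : nat) (q1 q2 : int) : bool :=
  [&& ~~ (q%:Z %| q1)%Z, ~~ (q%:Z %| q2)%Z,
      ~~ (q%:Z %| q1 + q2)%Z & ~~ (q%:Z %| q1 - q2)%Z].

(* Main.v *)
Require Import Defs.
From HB Require Import structures.
From mathcomp Require Import all_boot all_order all_algebra all_field.
Import Order.TTheory GRing.Theory Num.Theory.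
Local Open Scope ring_scope.
Set Implicit Arguments. Unset Strict Implicit. Unset Printing Implicit Defensive.
Lemma quad_fact (a a' : algC) : a * a' = 1 ->
  ('X - a%:P) * ('X - a'%:P) = ('X^2 + 1) - (a + a') *: 'X :> {poly algC}.
Proof.
move=> h.
rewrite mulrBl !mulrBr -expr2 -polyCM h polyC1 (mulrC 'X) !mul_polyC scalerDl.
rewrite opprB opprD !addrA (addrAC _ (- _) 1) (addrAC _ (- _)).
by [].
Qed.

Lemma quart_fact (c1 c2 : algC) (u : {poly algC}) :
  (u - c1 *: 'X) * (u - c2 *: 'X) =
  u ^+ 2 - (c1 + c2) *: (u * 'X) + (c1 * c2) *: 'X^2.
Proof.
have e1 : u * (c2 *: 'X) = c2 *: (u * 'X) by rewrite scalerAr.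
have e2 : c1 *: 'X * u = c1 *: (u * 'X) by rewrite -scalerAl mulrC.
have e3 : c1 *: 'X * (c2 *: 'X) = (c1 * c2) *: 'X^2 :> {poly algC}.
  by rewrite -scalerAl -scalerAr scalerA expr2.
rewrite mulrBl !mulrBr -expr2 e1 e2 e3 scalerDl opprB opprD !addrA.
by rewrite (addrAC _ _ (- (c1 *: _))) (addrAC (u ^+ 2)).
Qed.

Definition Tk (g : algC) (S : seq nat) (k : int) : algC :=
  \sum_(l <- S) (g ^ (k * l%:Z) + g ^ (- (k * l%:Z))).
Definition W (n : nat) (s t : algC) : {poly algC} :=
  ('X^2 + 1) ^+ 2 *+ n - s *: (('X^2 + 1) * 'X) + t *: 'X^2.

Lemma inv_pair (g : algC) (m : int) : g != 0 -> g ^ m * g ^ (- m) = 1.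
Proof. by move=> gn0; rewrite -expfzDr // subrr expr0z. Qed.

Lemma cc_prod (g : algC) (q1 q2 : int) (l : nat) : g != 0 ->
  (g ^ (q1 * l%:Z) + g ^ (- (q1 * l%:Z))) * (g ^ (q2 * l%:Z) + g ^ (- (q2 * l%:Z)))
  = (g ^ ((q1 + q2) * l%:Z) + g ^ (- ((q1 + q2) * l%:Z)))
    + (g ^ ((q1 - q2) * l%:Z) + g ^ (- ((q1 - q2) * l%:Z))).
Proof.
move=> gn0.
rewrite mulrDl !mulrDr -!expfzDr // !mulrDl !mulNr.
rewrite !opprD !opprK.
rewrite (addrC (- (q1 * l%:Z)) (q2 * l%:Z)).
by rewrite [g ^ (q2 * _ - _) + _]addrC addrACA.
Qed.

Lemma PiS_eq (g : algC) S q1 q2 : g != 0 ->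
  PiS g S q1 q2 = W (size S) (Tk g S q1 + Tk g S q2)
                    (Tk g S (q1 + q2) + Tk g S (q1 - q2)).
Proof.
move=> gn0; rewrite /PiS /W /Tk.
under eq_bigr => l _ do
  rewrite !quad_fact ?inv_pair // quart_fact cc_prod //.
rewrite big_split /= sumrB -!scaler_suml big_split /= big_const_seq count_predT iter_addr_0.
by rewrite [X in _ + X *: 'X^2]big_split.
Qed.
Lemma expz_eq1 (q : nat) (g : algC) (m : int) : q.-primitive_root g ->
  (g ^ m == 1) = (q%:Z %| m)%Z.
Proof.
move=> pg; have dz : (q%:Z %| m)%Z = (q %| `|m|)%N by [].
rewrite dz; case: m {dz} => n /=.
  by rewrite (prim_order_dvd pg).
by rewrite (prim_order_dvd pg) -[g ^ Negz n]/((g ^+ n.+1)^-1) invr_eq1.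
Qed.

Lemma expz_natM (g : algC) (k : int) (x d : nat) :
  g ^ (k * (x * d)%N%:Z) = (g ^ (k * d%:Z)) ^+ x.
Proof. by rewrite PoszM (mulrC x%:Z) mulrA -exprz_exp. Qed.

Lemma geo (q : nat) (g : algC) (d e : nat) (k : int) :
  q.-primitive_root g -> (d * e)%N = q -> (0 < d)%N ->
  \sum_(0 <= x < e) g ^ (k * (x * d)%N%:Z) = if (e%:Z %| k)%Z then e%:R else 0.
Proof.
move=> pg de d0.
under eq_bigr => x _ do rewrite expz_natM.
set w := g ^ (k * d%:Z).
have we : (w == 1) = (e%:Z %| k)%Z.
  rewrite /w (expz_eq1 _ pg); rewrite -[LHS]/(q %| `|(k * d%:Z)%R|)%N -[RHS]/(e %| `|k|)%N abszM /= -de (mulnC (absz k)) dvdn_pmul2l //.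
rewrite -we; case: eqP => [->|/eqP wn1].
  by rewrite (eq_bigr (fun _ => 1)) ?sumr_const_nat ?subn0 // => i _; rewrite expr1n.
have we1 : w ^+ e = 1.
  rewrite -expz_natM mulnC de mulrC -exprz_exp.
  have -> : g ^ q%:Z = 1 by exact: (prim_expr_order pg).
  by rewrite exp1rz.
apply/eqP; move: (subrX1 w e); rewrite we1 subrr big_mkord => /esym/eqP.
by rewrite mulf_eq0 subr_eq0 (negbTE wn1).
Qed.
Lemma reindex (R : zmodType) (F : nat -> R) (d e : nat) : (0 < d)%N ->
  \sum_(0 <= l < d * e) (if (d %| l)%N then F l else 0) = \sum_(0 <= x < e) F (x * d)%N.
Proof.
move=> d0; elim: e => [|e IH]; first by rewrite muln0 !big_geq.
rewrite big_nat_recr //= -IH mulnS addnC.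
rewrite (@big_cat_nat _ _ _ (d * e) 0 (d * e + d)) ?leq_addr //=.
congr (_ + _).
rewrite big_ltn; last by rewrite -addn1 leq_add2l.
rewrite (dvdn_mulr _ (dvdnn d)) mulnC big1_seq ?addr0 // => l.
move=> /andP [_]; rewrite mem_index_iota => /andP [h1 h2].
have -> : (d %| l)%N = false; last by [].
apply/negbTE/negP => dl.
have : (d %| l - e * d)%N by rewrite dvdn_sub // dvdn_mull.
move/dvdn_leq; rewrite subn_gt0 h1 => /(_ isT).
by rewrite leq_subRL ?(ltnW h1) // leqNgt h2.
Qed.

Lemma sumdiv (q : nat) (g : algC) (d e : nat) (k : int) :
  q.-primitive_root g -> (d * e)%N = q -> (0 < d)%N ->
  \sum_(0 <= l < q) (if (d %| l)%N then g ^ (k * l%:Z) else 0)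
   = if (e%:Z %| k)%Z then e%:R else 0.
Proof. by move=> pg de d0; rewrite -{1}de reindex // (geo _ pg de). Qed.

Lemma sumA (p1 p2 : nat) (g : algC) (k : int) :
  prime p1 -> prime p2 -> p1 != p2 -> (p1 * p2)%N.-primitive_root g ->
  \sum_(l <- setA (p1 * p2)) g ^ (k * l%:Z) =
  (if ((p1 * p2)%N%:Z %| k)%Z then (p1 * p2)%N%:R else 0)
  - (if (p2%:Z %| k)%Z then p2%:R else 0)
  - (if (p1%:Z %| k)%Z then p1%:R else 0) + 1.
Proof.
move=> pr1 pr2 ne pg.
set q := (p1 * p2)%N.
have q1 : (1 < q)%N.
  by rewrite /q -(muln1 1%N) ltn_mul // prime_gt1. 
have cop : coprime p1 p2 by rewrite prime_coprime // dvdn_prime2 // .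
rewrite /setA big_filter.
have -> : iota 1 q.-1 = index_iota 1 q by rewrite /index_iota subn1.
have <- : \sum_(0 <= l < q | coprime l q) g ^ (k * l%:Z) =
          \sum_(1 <= l < q | coprime l q) g ^ (k * l%:Z).
  by rewrite big_ltn_cond ?(ltnW q1) // /coprime gcd0n gtn_eqF.
rewrite big_mkcond /=.
rewrite (eq_bigr (fun l => (if (1 %| l)%N then g ^ (k * l%:Z) else 0)
   - (if (p1 %| l)%N then g ^ (k * l%:Z) else 0)
   - (if (p2 %| l)%N then g ^ (k * l%:Z) else 0)
   + (if (q %| l)%N then g ^ (k * l%:Z) else 0))); last first.
  move=> l _; rewrite /q coprimeMr (Gauss_dvd _ cop) dvd1n.
  rewrite !(coprime_sym l) !prime_coprime //.
  case: (p1 %| l)%N; case: (p2 %| l)%N => /=;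
    by rewrite ?(subrr, sub0r, subr0, addr0, addNr, add0r).
rewrite big_split /= !sumrB.
rewrite (@sumdiv q g 1 q k pg (mul1n q)) // (@sumdiv q g p1 p2 k pg (erefl q)) ?prime_gt0 //.
rewrite (@sumdiv q g p2 p1 k pg (esym (mulnC p1 p2))) ?prime_gt0 //.
rewrite (@sumdiv q g q 1 k pg (muln1 q)) ?(ltnW q1) //.
by rewrite -[(1%:Z %| k)%Z]/(1 %| `|k|)%N dvd1n.
Qed.

Lemma sumBgen (q : nat) (g : algC) (d e : nat) (k : int) :
  q.-primitive_root g -> (d * e)%N = q -> (0 < d)%N -> (0 < e)%N ->
  \sum_(l <- [seq (x * d)%N | x <- iota 1 e.-1]) g ^ (k * l%:Z) =
  (if (e%:Z %| k)%Z then e%:R else 0) - 1.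
Proof.
move=> pg de d0 e0; rewrite big_map.
have -> : iota 1 e.-1 = index_iota 1 e by rewrite /index_iota subn1.
rewrite -(geo k pg de d0) (big_ltn e0) mul0n mulr0 expr0z.
by rewrite [1 + _]addrC addrK.
Qed.

Lemma sumB (p1 p2 : nat) (g : algC) (k : int) :
  prime p1 -> prime p2 -> (p1 * p2)%N.-primitive_root g ->
  \sum_(l <- setB p1 p2) g ^ (k * l%:Z) = (if (p2%:Z %| k)%Z then p2%:R else 0) - 1.
Proof. by move=> pr1 pr2 pg; rewrite (sumBgen _ pg (erefl _)) ?prime_gt0. Qed.

Lemma sumC (p1 p2 : nat) (g : algC) (k : int) :
  prime p1 -> prime p2 -> (p1 * p2)%N.-primitive_root g ->
  \sum_(l <- Defs.setC p1 p2) g ^ (k * l%:Z) = (if (p1%:Z %| k)%Z then p1%:R else 0) - 1.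
Proof. by move=> pr1 pr2 pg; rewrite (sumBgen _ pg (mulnC p2 p1)) ?prime_gt0. Qed.

Lemma dvdzN' (d k : int) : (d %| - k)%Z = (d %| k)%Z.
Proof. by rewrite rpredN. Qed.

Lemma dvdzn (p : nat) (k : int) : (p%:Z %| k)%Z = (p %| `|k|)%N.
Proof. by []. Qed.

Lemma Tk_split g S k :
  Tk g S k = \sum_(l <- S) g ^ (k * l%:Z) + \sum_(l <- S) g ^ ((- k) * l%:Z).
Proof. by rewrite /Tk big_split /=; congr (_ + _); apply: eq_bigr => l _; rewrite mulNr. Qed.

Definition bk (p1 p2 : nat) (k : int) := ((p1%:Z %| k)%Z, (p2%:Z %| k)%Z).
Definition eA (p1 p2 : nat) (b : bool * bool) : algC :=
  0 - (if b.2 then p2%:R else 0) - (if b.1 then p1%:R else 0) + 1.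
Definition eB (p2 : nat) (b : bool * bool) : algC := (if b.2 then p2%:R else 0) - 1.
Definition eC (p1 : nat) (b : bool * bool) : algC := (if b.1 then p1%:R else 0) - 1.

Lemma TA (p1 p2 : nat) (g : algC) (k : int) :
  prime p1 -> prime p2 -> p1 != p2 -> (p1 * p2)%N.-primitive_root g ->
  ~~ ((p1 * p2)%N%:Z %| k)%Z ->
  Tk g (setA (p1 * p2)) k = eA p1 p2 (bk p1 p2 k) *+ 2.
Proof.
move=> pr1 pr2 ne pg nq.
rewrite Tk_split !sumA // !dvdzN' (negbTE nq) mulr2n.
by [].
Qed.

Lemma TB (p1 p2 : nat) (g : algC) (k : int) :
  prime p1 -> prime p2 -> (p1 * p2)%N.-primitive_root g ->
  Tk g (setB p1 p2) k = eB p2 (bk p1 p2 k) *+ 2.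
Proof.
by move=> pr1 pr2 pg; rewrite Tk_split !sumB // !dvdzN' mulr2n.
Qed.

Lemma TC (p1 p2 : nat) (g : algC) (k : int) :
  prime p1 -> prime p2 -> (p1 * p2)%N.-primitive_root g ->
  Tk g (Defs.setC p1 p2) k = eC p1 (bk p1 p2 k) *+ 2.
Proof.
by move=> pr1 pr2 pg; rewrite Tk_split !sumC // !dvdzN' mulr2n.
Qed.

Definition tup := ((bool * bool) * (bool * bool) * (bool * bool) * (bool * bool))%type.

Definition H (p1 p2 : nat) (t : tup) :=
  let: (x1, x2, y1, y2) := t in
  (W (size (setA (p1 * p2))) (eA p1 p2 x1 *+ 2 + eA p1 p2 x2 *+ 2)
       (eA p1 p2 y1 *+ 2 + eA p1 p2 y2 *+ 2),
   W (size (setB p1 p2)) (eB p2 x1 *+ 2 + eB p2 x2 *+ 2)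
       (eB p2 y1 *+ 2 + eB p2 y2 *+ 2),
   W (size (Defs.setC p1 p2)) (eC p1 x1 *+ 2 + eC p1 x2 *+ 2)
       (eC p1 y1 *+ 2 + eC p1 y2 *+ 2)).

Lemma Smap_H (p1 p2 : nat) (g : algC) (q1 q2 : int) :
  prime p1 -> prime p2 -> p1 != p2 -> (p1 * p2)%N.-primitive_root g ->
  admissible (p1 * p2) q1 q2 ->
  Smap g p1 p2 q1 q2 =
  H p1 p2 (bk p1 p2 q1, bk p1 p2 q2, bk p1 p2 (q1 + q2), bk p1 p2 (q1 - q2)).
Proof.
move=> pr1 pr2 ne pg /and4P [n1 n2 n3 n4].
have gn0 : g != 0.
  apply/eqP => g0; move: (prim_expr_order pg); rewrite g0 expr0n.
  by rewrite muln_eq0 !gtn_eqF ?prime_gt0 //= => /eqP; rewrite eq_sym oner_eq0.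
rewrite /Smap /psi /alpha /beta !PiS_eq //.
by rewrite !TA // !(@TB p1 p2 g) // !(@TC p1 p2 g).
Qed.

Definition okp (A B S D : bool) :=
  [&& (A && B) ==> (S && D), (S && D) ==> (A && B), (A && S) ==> B,
      (A && D) ==> B, (B && S) ==> A & (B && D) ==> A].

Definition feasible (t : tup) :=
  let: (x1, x2, y1, y2) := t in
  [&& ~~ (x1.1 && x1.2), ~~ (x2.1 && x2.2), ~~ (y1.1 && y1.2), ~~ (y2.1 && y2.2),
      okp x1.1 x2.1 y1.1 y2.1 & okp x1.2 x2.2 y1.2 y2.2].

Definition code (b : bool * bool) : nat := (2 * b.1 + b.2)%N.
Definition sort2 (x y : bool * bool) := if (code x <= code y)%N then (x, y) else (y, x).
Definition norm (t : tup) : tup :=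
  let: (x1, x2, y1, y2) := t in
  let: (a, b) := sort2 x1 x2 in let: (c, d) := sort2 y1 y2 in (a, b, c, d).

Definition bb : seq (bool * bool) := [:: (false, false); (false, true); (true, false); (true, true)].
Definition alltup : seq tup := [seq (abc, d) | abc <- [seq (ab, c) | ab <- [seq (a, b) | a <- bb, b <- bb], c <- bb], d <- bb].
Definition reps : seq tup := undup [seq norm t | t <- alltup & feasible t].

Lemma size_reps : size reps = 11%N.
Proof. by vm_compute. Qed.

Lemma norm_in t : feasible t -> norm t \in reps.
Proof.
move=> ft; rewrite mem_undup; apply: map_f; rewrite mem_filter ft /=.
by case: t {ft} => [[[[[] []] [[] []]] [[] []]] [[] []]].
Qed.

Lemma H_norm p1 p2 t : H p1 p2 (norm t) = H p1 p2 t.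
Proof.
case: t => [[[x1 x2] y1] y2]; rewrite /norm /sort2.
have sx : H p1 p2 (x2, x1, y1, y2) = H p1 p2 (x1, x2, y1, y2).
  by rewrite /H (addrC (eA _ _ x2 *+ 2)) (addrC (eB _ x2 *+ 2)) (addrC (eC _ x2 *+ 2)).
have sy : forall a b, H p1 p2 (a, b, y2, y1) = H p1 p2 (a, b, y1, y2).
  by move=> a b; rewrite /H (addrC (eA _ _ y2 *+ 2)) (addrC (eB _ y2 *+ 2)) (addrC (eC _ y2 *+ 2)).
by case: ifP => _; case: ifP => _; rewrite ?sy ?sx.
Qed.

Lemma okp_int (p : nat) (q1 q2 : int) : prime p -> odd p ->
  okp (p%:Z %| q1)%Z (p%:Z %| q2)%Z (p%:Z %| q1 + q2)%Z (p%:Z %| q1 - q2)%Z.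
Proof.
move=> pr op.
have two : forall m : int, (p%:Z %| m *+ 2)%Z -> (p%:Z %| m)%Z.
  move=> m; rewrite -mulr_natr !dvdzn abszM Gauss_dvdl //.
  by rewrite coprimen2.
rewrite /okp; do ![apply/andP; split]; apply/implyP => /andP [h1 h2].
- by rewrite rpredD ?rpredB.
- apply/andP; split; apply: two.
    have <- : (q1 + q2) + (q1 - q2) = q1 *+ 2 by rewrite addrACA subrr addr0 mulr2n.
    by rewrite rpredD.
  have <- : (q1 + q2) - (q1 - q2) = q2 *+ 2.
    by rewrite opprB addrC addrA addrNK mulr2n.
  by rewrite rpredB.
- have <- : - q1 + (q1 + q2) = q2 by rewrite addKr.
  by rewrite rpredD ?rpredN.
- have <- : q1 - (q1 - q2) = q2 by rewrite opprB addrC addrNK.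
  by rewrite rpredB.
- have <- : (q1 + q2) - q2 = q1 by rewrite addrK.
  by rewrite rpredB.
- have <- : (q1 - q2) + q2 = q1 by rewrite subrK.
  by rewrite rpredD.
Qed.

Lemma adm_bk (p1 p2 : nat) (k : int) : coprime p1 p2 ->
  ~~ ((p1 * p2)%N%:Z %| k)%Z -> ~~ ((bk p1 p2 k).1 && (bk p1 p2 k).2).
Proof. by move=> cop; rewrite /= !dvdzn (Gauss_dvd _ cop). Qed.

Theorem proposition3p1p3 (p1 p2 : nat) (g : algC) :
  prime p1 -> prime p2 -> p1 != p2 -> odd p1 -> odd p2 ->
  (p1 * p2)%N.-primitive_root g ->
  exists s : seq ({poly algC} * {poly algC} * {poly algC}),
    (size s <= 11)%N /\
    forall q1 q2 : int, admissible (p1 * p2) q1 q2 ->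
      Smap g p1 p2 q1 q2 \in s.
Proof.
move=> pr1 pr2 ne o1 o2 pg.
exists [seq H p1 p2 t | t <- reps]; split; first by rewrite size_map size_reps.
move=> q1 q2 adm.
have cop : coprime p1 p2 by rewrite prime_coprime // dvdn_prime2.
rewrite (Smap_H pr1 pr2 ne pg adm) -H_norm; apply: map_f; apply: norm_in.
move: adm => /and4P [n1 n2 n3 n4].
rewrite /feasible (adm_bk cop n1) (adm_bk cop n2) (adm_bk cop n3) (adm_bk cop n4) /=.
by rewrite !okp_int.
Qed.
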